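(* Let $\pi^{(d)}$ be $\tau^{(d)}$ with $d\ge6$ or $\sigma^{(d)}$ with $d\ge8$, and write $Q=Q_{\pi^{(d)}}$, $\Omega=\Omega_{\pi^{(d)}}$. Then $\{\overline{e}_\alpha\}_{\alpha\in\mathcal{A}}^{Q}=\mathrm{NS}(Q)\setminus\ker\overline{\Omega}$.
   Context: Alphabet $\mathcal{A}=\{1,\dots,d\}$; $\tau^{(d)}$ has top row $1,2,\dots,d$ and bottom row $d,d-1,\dots,6,3,2,5,4,1$; $\sigma^{(d)}$ has top row $1,\dots,d$ and bottom row $d,d-1,\dots,8,3,2,7,6,5,4,1$ (rows list letters in order of $\pi_{\mathrm t}$, $\pi_{\mathrm b}$). $(\Omega_\pi)_{\alpha\beta}=+1$ if $\pi_{\mathrm t}(\alpha)<\pi_{\mathrm t}(\beta)$ and $\pi_{\mathrm b}(\alpha)>\pi_{\mathrm b}(\beta)$, $-1$ if the reverse inequalities hold, $0$ otherwise. Bar denotes reduction mod 2; $\langle u,v\rangle=u\overline{\Omega}v^{\intercal}$ on $(\mathbb{Z}/2\mathbb{Z})^{\mathcal{A}}$ and $\ker\overline{\Omega}=\{u:\langle u,v\rangle=0\ \forall v\}$. $Q_\pi(u)=\sum_{\pi_{\mathrm t}(\alpha)<\pi_{\mathrm t}(\beta)}u_\alpha(\Omega_\pi)_{\alpha\beta}u_\beta+\sum_\alpha u_\alpha\bmod2$. $\mathrm{NS}(Q)=\{u:Q(u)=1\}$ (non-singular vectors). A set $X\subseteq\mathrm{NS}(Q)$ is $Q$-closed if $v,w\in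 X$ and $Q(v+w)=1$ imply $v+w\in X$; $Y^{Q}$ is the smallest $Q$-closed set containing $Y\subseteq\mathrm{NS}(Q)$. *)

(* Defs.v *)
From HB Require Import structures.
From mathcomp Require Import all_boot all_order all_algebra.
Set Implicit Arguments. Unset Strict Implicit. Unset Printing Implicit Defensive.
Import Order.TTheory GRing.Theory Num.Theory.
Local Open Scope ring_scope.

(* Alphabet {1,...,d} is represented by 'I_d : letter alpha = (val alpha).+1.
   A (generalized) permutation pi = (pi_t, pi_b) is given by the position
   functions of letters in the top and bottom rows (0-based positions;
   only comparisons matter). *)
Record gperm (d : nat) := GPerm { pit : 'I_d -> nat ; pib : 'I_d -> nat }.

Definition perm_of_bottom (d : nat) (bot : seq nat) : gperm d :=
  @GPerm d (fun a => val a) (fun a => index (val a).+1 bot).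

Definition tau_bottom (d : nat) : seq nat :=
  rev (iota 6 (d - 5)) ++ [:: 3; 2; 5; 4; 1]%N.
Definition sigma_bottom (d : nat) : seq nat :=
  rev (iota 8 (d - 7)) ++ [:: 3; 2; 7; 6; 5; 4; 1]%N.

Definition tau (d : nat) : gperm d := perm_of_bottom d (tau_bottom d).
Definition sigma (d : nat) : gperm d := perm_of_bottom d (sigma_bottom d).

Definition Omega (d : nat) (pi : gperm d) : 'M[int]_d :=
  \matrix_(a < d, b < d)
    (if (pit pi a < pit pi b)%N && (pib pi a > pib pi b)%N then 1
     else if (pit pi a > pit pi b)%N && (pib pi a < pib pi b)%N then -1
     else 0).

Definition Omegabar (d : nat) (pi : gperm d) : 'M['F_2]_d :=
  map_mx (fun z : int => z%:~R) (Omega pi).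

Definition vec (d : nat) := 'rV['F_2]_d.

Definition ebar (d : nat) (a : 'I_d) : vec d := delta_mx 0 a.

Definition form (d : nat) (pi : gperm d) (u v : vec d) : 'F_2 :=
  (u *m Omegabar pi *m v^T) 0 0.

Definition kerOmega (d : nat) (pi : gperm d) : {set vec d} :=
  [set u | [forall v, form pi u v == 0]].

Definition Qform (d : nat) (pi : gperm d) (u : vec d) : 'F_2 :=
  \sum_(a < d) \sum_(b < d | (pit pi a < pit pi b)%N)
      u 0 a * Omegabar pi a b * u 0 b
  + \sum_(a < d) u 0 a.

Definition NS (d : nat) (pi : gperm d) : {set vec d} :=
  [set u | Qform pi u == 1].

Definition Qclosed (d : nat) (pi : gperm d) (X : {set vec d}) : bool :=
  (X \subset NS pi) &&
  [forall v in X, forall w in X, (Qform pi (v + w) == 1) ==> (v + w \in X)].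

Definition Qclosure (d : nat) (pi : gperm d) (Y : {set vec d}) : {set vec d} :=
  \bigcap_(X | Qclosed pi X && (Y \subset X)) X.

(* Main.v *)
Require Import Defs.
From HB Require Import structures.
From mathcomp Require Import all_boot all_order all_algebra.
From mathcomp Require Import zify ring.
Set Implicit Arguments. Unset Strict Implicit. Unset Printing Implicit Defensive.
Import Order.TTheory GRing.Theory Num.Theory.

Definition getc (p : nat * nat * nat) (c : nat) : nat :=
  let: (x, y, z) := p in if c == 0 then x else if c == 1 then y else z.
Definition stepp (p : nat * nat * nat) (m : nat * bool) : nat * nat * nat :=
  let: (x, y, z) := p in let: (c, a) := m in
  let f v := if a then v.+1 else v.-1 in
  if c == 0 then (f x, y, z) else if c == 1 then (x, f y, z) else (x, y, f z).
Definition csize (Rn Un c : nat) : nat := if c == 0 then 2 else if c == 1 then Rn else Un.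
Definition valid1 (Rn Un : nat) (p : nat * nat * nat) (m : nat * bool) : bool :=
  let: (x, y, z) := p in let: (c, a) := m in
  (if a then getc p c < csize Rn Un c else 0 < getc p c) &&
  odd (x + y + z + (~~ a) + (if c == 0 then y else 0) + (if c == 1 then x else 0)).
Fixpoint valid_path Rn Un p (ms : seq (nat * bool)) : bool :=
  if ms is m :: ms' then valid1 Rn Un p m && valid_path Rn Un (stepp p m) ms' else true.
Definition final p (ms : seq (nat * bool)) := foldl stepp p ms.
Definition qf (p : nat * nat * nat) : bool :=
  let: (x, y, z) := p in odd ('C(x + y + z, 2) + (x + y + z) + x * y).
Definition notbad (Rn Un : nat) (p : nat * nat * nat) : bool :=
  let: (x, y, z) := p in ~~ [&& x == 2, y == Rn, z == Un & odd Un].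
Definition tent2 : seq ((nat*nat*nat)*(nat*bool*nat)) := [:: ((0,0,1),(0,true,0)); ((0,0,2),(2,false,1)); ((0,1,0),(0,true,0)); ((0,1,1),(2,false,1)); ((0,2,0),(1,false,1)); ((1,0,0),(0,true,0)); ((1,0,1),(2,false,1)); ((1,1,1),(1,false,2)); ((1,1,2),(2,false,3)); ((1,2,2),(1,false,4)); ((2,0,0),(0,false,1)); ((2,1,2),(0,false,4)); ((2,2,1),(2,true,6)); ((2,2,2),(1,false,5))].
Definition tent4 : seq ((nat*nat*nat)*(nat*bool*nat)) := [:: ((0,0,1),(0,true,0)); ((0,0,2),(2,false,1)); ((0,1,0),(0,true,0)); ((0,1,1),(2,false,1)); ((0,2,0),(1,false,1)); ((0,3,2),(1,true,14)); ((0,4,1),(0,true,12)); ((0,4,2),(2,false,13)); ((1,0,0),(0,true,0)); ((1,0,1),(2,false,1)); ((1,1,1),(1,false,2)); ((1,1,2),(2,false,3)); ((1,2,2),(1,false,4)); ((1,3,0),(0,true,9)); ((1,4,0),(1,false,10)); ((1,4,1),(2,false,11)); ((2,0,0),(0,false,1)); ((2,1,2),(0,false,4)); ((2,2,1),(2,true,6)); ((2,2,2),(1,false,5)); ((2,3,0),(2,true,8)); ((2,3,1),(1,false,7)); ((2,4,0),(1,false,9))].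
Definition tent Rn := if Rn == 2 then tent2 else tent4.
Definition tlook Rn p : nat * bool * nat :=
  (nth (p, (0, true, 0)) (tent Rn) (find (fun e => e.1 == p) (tent Rn))).2.
Definition tmove Rn p : nat * bool := (tlook Rn p).1.
Definition trank Rn p : nat := (tlook Rn p).2.
Definition meas Rn (p : nat * nat * nat) : nat :=
  let: (x, y, z) := p in if z <= 2 then trank Rn p else 20 + z.
Definition path_of Rn (p : nat * nat * nat) : seq (nat * bool) :=
  let: (x, y, z) := p in
  if z <= 2 then [:: tmove Rn p] else
  if ~~ odd z then
    (if ~~ odd (x + y) then [:: (2, false)]
     else if x == 1 then [:: (0, true); (2, false)]
     else if x == 2 then [:: (0, false); (2, false)]
     else [:: (1, true); (2, false)])
  else
    (if odd (x + y) then [:: (2, false)]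
     else if x == 0 then [:: (0, true); (2, false)]
     else if x == 1 then [:: (0, false); (2, false)]
     else if y < Rn then [:: (1, true); (2, false)]
     else [:: (2, true); (0, false); (1, false); (2, false); (0, false); (2, false)]).

Definition table_check Rn : bool :=
  all (fun x => all (fun y => all (fun z =>
    let p := (x, y, z) in
    (qf p && (2 <= x + y + z)) ==>
      (valid1 Rn 2 p (tmove Rn p) && (trank Rn (stepp p (tmove Rn p)) < trank Rn p)
       && (getc (stepp p (tmove Rn p)) 2 <= 2)))
    (iota 0 3)) (iota 0 Rn.+1)) (iota 0 3).

Lemma table_check2 : table_check 2. Proof. by vm_compute. Qed.
Lemma table_check4 : table_check 4. Proof. by vm_compute. Qed.
Lemma trank_le Rn p : trank Rn p <= 14.
Proof.
rewrite /trank /tlook /tent; case: ifP => _.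
  set i := find _ _; have : i <= size tent2 by apply: find_size.
  by case: i => [|[|[|[|[|[|[|[|[|[|[|[|[|[|[|i]]]]]]]]]]]]]]] //= _; rewrite nth_default.
set i := find _ _; have : i <= size tent4 by apply: find_size.
by do 24?[case: i => [|i] //=]; rewrite nth_default.
Qed.
Arguments valid1 : simpl never.
Arguments notbad : simpl never.
Arguments meas : simpl never.
Arguments stepp : simpl never.

Lemma valid1_mono Rn Un p m : valid1 Rn 2 p m -> 2 <= Un -> valid1 Rn Un p m.
Proof.
case: p => [[x y] z]; case: m => c a; rewrite /valid1 /csize /=.
case: a => //=; case/andP=> h ->; rewrite andbT => hU.
by move: h; case: ifP => // _; case: ifP => // _ h; apply: leq_trans hU.
Qed.

Lemma path_ok_small Rn Un x y z : (Rn == 2) || (Rn == 4) -> 2 <= Un -> x <= 2 -> y <= Rn -> z <= 2 ->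
  qf (x,y,z) -> 2 <= x+y+z ->
  let ms := path_of Rn (x,y,z) in
  [&& valid_path Rn Un (x,y,z) ms, meas Rn (final (x,y,z) ms) < meas Rn (x,y,z) & notbad Rn Un (final (x,y,z) ms)].
Proof.
move=> hR hU hx hy hz hq hk.
have -> : path_of Rn (x,y,z) = [:: tmove Rn (x,y,z)] by rewrite /path_of /= hz.
have hc : table_check Rn by case/orP: hR => /eqP ->; [exact: table_check2 | exact: table_check4].
have hx' : x \in iota 0 3 by rewrite mem_iota.
have hy' : y \in iota 0 Rn.+1 by rewrite mem_iota.
have hz' : z \in iota 0 3 by rewrite mem_iota.
move/allP: hc => /(_ x hx') /allP /(_ y hy') /allP /(_ z hz').
move/implyP; rewrite hq hk => /(_ isT) /andP [/andP [hv hr] hz2].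
rewrite /= (valid1_mono hv hU) /=.
move: hr hz2; case: (stepp _ _) => [[x' y'] z'] /= hr hz2.
rewrite /meas hz2 hz hr /=.
rewrite /notbad.
apply/negP => /and4P [_ _ /eqP e oU]; subst z'.
have e : Un = 2 by lia.
by rewrite e in oU.
Qed.

Lemma path_ok_big Rn Un x y z : (Rn == 2) || (Rn == 4) -> x <= 2 -> y <= Rn -> z <= Un -> 3 <= z ->
  notbad Rn Un (x,y,z) ->
  let ms := path_of Rn (x,y,z) in
  [&& valid_path Rn Un (x,y,z) ms, meas Rn (final (x,y,z) ms) < meas Rn (x,y,z) & notbad Rn Un (final (x,y,z) ms)].
Proof.
move=> hR hx hy hzU hz3 hnb /=.
have hz2 : (z <= 2) = false by apply/negbTE; rewrite -ltnNge.
have hRn : Rn <= 4 by case/orP: hR => /eqP ->.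
have oRn : odd Rn = false by case/orP: hR => /eqP ->.
have mf : forall x' y', meas Rn (x', y', z.-1) < meas Rn (x, y, z).
  move=> x' y'; rewrite /meas hz2; case: ifP => _; last by lia.
  by apply: leq_ltn_trans (trank_le _ _) _; lia.
have nf : forall x' y', notbad Rn Un (x', y', z.-1).
  by move=> x' y'; rewrite /notbad; apply/negP => /and4P [_ _ /eqP e _]; lia.
rewrite /path_of /= hz2.
case: (boolP (odd z)) => oz /=.
all: rewrite /notbad in hnb.
all: repeat case: ifP => ?; rewrite /final /= /valid1 /stepp /getc /csize /= ?mf ?nf; try lia.

Qed.

Local Open Scope ring_scope.

Lemma F2cases (x : 'F_2) : x = 0 \/ x = 1.
Proof. by case: x => [[|[|]]] //= ?; [left|right]; apply: val_inj. Qed.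

Lemma F2neq (x : 'F_2) : x = (x != 0)%:R.
Proof. by case: (F2cases x) => ->. Qed.

Lemma F2nat (n : nat) : (n%:R : 'F_2) = (odd n)%:R.
Proof. by rewrite -modn2 Fp_nat_mod. Qed.

Lemma F2dbl (x : 'F_2) : x + x = 0.
Proof. by case: (F2cases x) => ->; [rewrite addr0 | apply/eqP]. Qed.

Lemma F2one_odd (n : nat) : (n%:R : 'F_2) = 1 -> odd n.
Proof. by rewrite F2nat; case: (odd n) => // /eqP. Qed.

Lemma ebarE d (c i : 'I_d) : ebar c 0 i = (i == c)%:R.
Proof. by rewrite /ebar mxE eqxx. Qed.

Lemma card_int d lo hi : (hi <= d)%N -> #|[pred a : 'I_d | (lo <= val a < hi)%N]| = (hi - lo)%N.
Proof.
move=> hd; rewrite -sum1_card.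
rewrite (big_mkcond (fun a : 'I_d => _ \in _)) /= -(big_mkord xpredT (fun i => if (lo <= i < hi)%N then 1%N else 0%N)).
case: (leqP lo hi) => hlh; last first.
  rewrite big1; first lia. by move=> i _; case: ifP => //; lia.
have h1 : (0 <= lo)%N by [].
have h2 : (lo <= d)%N by lia.
rewrite (big_cat_nat h1 h2) /=.
rewrite big1_seq /=; last by move=> i; rewrite mem_index_iota => /andP [_ h]; case: ifP => //; lia.
rewrite (big_cat_nat hlh hd) /=.
rewrite [\sum_(hi <= i < d) _]big1_seq /=; last by move=> i; rewrite mem_index_iota => /andP [h _]; case: ifP => //; lia.
rewrite addn0 add0n (eq_big_seq (fun _ => 1%N)); last by move=> i; rewrite mem_index_iota => h; rewrite h.
by rewrite sum_nat_const_nat muln1.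
Qed.

Definition cPn (i : nat) : bool := (0 < i < 3)%N.
Definition cRn (Rn i : nat) : bool := (2 < i < 3 + Rn)%N.
Definition cUn (Rn i : nat) : bool := ~~ cPn i && ~~ cRn Rn i.
Definition clsn (Rn c i : nat) : bool :=
  if c == 0%N then cPn i else if c == 1%N then cRn Rn i else cUn Rn i.
Definition crossn (Rn i j : nat) : bool := cPn i && cRn Rn j || cRn Rn i && cPn j.
Definition cnt d (C : pred nat) (u : vec d) : nat :=
  #|[pred a : 'I_d | C (val a) && (u 0 a != 0)]|.
Definition prof d Rn (u : vec d) : nat * nat * nat :=
  (cnt cPn u, cnt (cRn Rn) u, cnt (cUn Rn) u).

Lemma card_cP d : (3 <= d)%N -> #|[pred a : 'I_d | cPn a]| = 2%N.
Proof. by move=> h; rewrite (card_int 1 h). Qed.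

Lemma card_cR d Rn : (3 + Rn <= d)%N -> #|[pred a : 'I_d | cRn Rn a]| = Rn.
Proof. by move=> h; rewrite (card_int 3 h) addKn. Qed.

Lemma card_cU d Rn : (3 + Rn <= d)%N -> #|[pred a : 'I_d | cUn Rn a]| = (d - (2 + Rn))%N.
Proof.
move=> h; have := cardC [pred a : 'I_d | (1 <= val a < 3 + Rn)%N].
rewrite (card_int 1 h) card_ord => e.
have -> : #|[pred a : 'I_d | cUn Rn a]| = #|[predC [pred a : 'I_d | (1 <= val a < 3 + Rn)%N]]|.
  apply: eq_card => a; rewrite !inE /cUn /cPn /cRn.
  by case: a => [[|[|[|i]]] hi] //=; rewrite ?ltnS; case: (i < Rn)%N.
move: e; set K := #|_|; lia.
Qed.

Lemma addeE d (u : vec d) c a : (u + ebar c) 0 a = u 0 a + (a == c)%:R.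
Proof. by rewrite mxE ebarE. Qed.

Lemma cnt_D1 d C (u : vec d) c :
  (cnt C (u + ebar c)%R - (C c && (u 0 c + 1 != 0)%R) = cnt C u - (C c && (u 0 c != 0)%R))%N.
Proof.
rewrite /cnt (cardD1 c) [in RHS](cardD1 c) !inE !addeE eqxx.
rewrite !addKn; apply: eq_card => a; rewrite !inE addeE.
by case: eqP => //= _; rewrite addr0.
Qed.

Lemma cnt_add d C (u : vec d) c : u 0 c = 0 -> cnt C (u + ebar c) = (cnt C u + C c)%N.
Proof.
move=> h; have := cnt_D1 C u c; rewrite h add0r eqxx oner_eq0 andbT andbF subn0.
case hc: (C c) => /=; last by rewrite !subn0 addn0.
have : (0 < cnt C (u + ebar c)%R)%N.
  by apply/card_gt0P; exists c; rewrite !inE addeE h eqxx add0r oner_eq0 andbT hc.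
lia.
Qed.

Lemma cnt_rem d C (u : vec d) c : u 0 c != 0 -> (cnt C (u + ebar c)%R + C c)%N = cnt C u.
Proof.
move=> h; have := cnt_D1 C u c; rewrite h.
have -> : u 0 c + 1 = 0 by rewrite (F2neq (u 0 c)) h F2dbl.
rewrite eqxx andbF andbT subn0.
case hc: (C c) => /=; last by rewrite !subn0 addn0.
have : (0 < cnt C u)%N by apply/card_gt0P; exists c; rewrite !inE h hc.
lia.
Qed.

Definition qq d (M : 'M['F_2]_d) (u : vec d) : 'F_2 :=
  \sum_(a < d) \sum_(b < d | (val a < val b)%N) u 0 a * M a b * u 0 b + \sum_(a < d) u 0 a.

Lemma formE d (M : 'M['F_2]_d) (u v : vec d) :
  (u *m M *m v^T) 0 0 = \sum_a \sum_b u 0 a * M a b * v 0 b.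
Proof.
rewrite mxE (eq_bigr (fun b => \sum_a u 0 a * M a b * v 0 b)); last first.
  by move=> b _; rewrite !mxE big_distrl /=; apply: eq_bigr => a _; rewrite ?mxE.

by rewrite exchange_big.
Qed.

Lemma form_ebar d (M : 'M['F_2]_d) (u : vec d) c :
  (u *m M *m (ebar c)^T) 0 0 = (u *m M) 0 c.
Proof.
rewrite mxE (bigD1 c) //= big1 ?addr0.
  by rewrite [in RHS]mxE !mxE !eqxx mulr1.
by move=> b hb; rewrite !mxE (negbTE hb) andbF mulr0.
Qed.

Lemma polar d (M : 'M['F_2]_d) (u v : vec d) :
  (forall a b, M a b = M b a) -> (forall a, M a a = 0) ->
  qq M (u + v) = qq M u + qq M v + (u *m M *m v^T) 0 0.
Proof.
move=> Ms Md; rewrite formE /qq.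
have e1 : forall a, \sum_b u 0 a * M a b * v 0 b =
   \sum_(b | (val a < val b)%N) u 0 a * M a b * v 0 b + \sum_(b | (val b < val a)%N) u 0 a * M a b * v 0 b.
  move=> a; rewrite !(big_mkcond (fun b : 'I_d => (_ < _)%N)) -big_split /=.
  apply: eq_bigr => b _; case: ltngtP => h; rewrite ?addr0 ?add0r //.
  by rewrite (val_inj h) Md mulr0 mul0r.
rewrite (eq_bigr _ (fun a _ => e1 a)) big_split /=.
have e2 : \sum_a \sum_(b | (val b < val a)%N) u 0 a * M a b * v 0 b =
          \sum_a \sum_(b | (val a < val b)%N) v 0 a * M a b * u 0 b.
  under eq_bigr => a _ do rewrite big_mkcond /=.
  under [RHS]eq_bigr => a _ do rewrite big_mkcond /=.
  rewrite [LHS]exchange_big /=.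
  apply: eq_bigr => a _; apply: eq_bigr => b _; case: ifP => // _.
  by rewrite Ms; ring.
rewrite e2.
have e3 : forall a, \sum_(b | (val a < val b)%N) (u + v) 0 a * M a b * (u + v) 0 b =
  \sum_(b | (val a < val b)%N) u 0 a * M a b * u 0 b + \sum_(b | (val a < val b)%N) v 0 a * M a b * v 0 b +
  (\sum_(b | (val a < val b)%N) u 0 a * M a b * v 0 b + \sum_(b | (val a < val b)%N) v 0 a * M a b * u 0 b).
  move=> a; rewrite -!big_split /=; apply: eq_bigr => b _; rewrite !mxE; ring.
rewrite (eq_bigr _ (fun a _ => e3 a)) !big_split /=.
have e4 : \sum_(a < d) (u + v) 0 a = \sum_a u 0 a + \sum_a v 0 a by rewrite -big_split; apply: eq_bigr => a _; rewrite mxE.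
rewrite e4; ring.
Qed.

Lemma PR_excl Rn i : cPn i && cRn Rn i = false.
Proof. by rewrite /cPn /cRn; case: i => [|[|[|i]]]. Qed.

Lemma sum_cnt d (C : pred nat) (u : vec d) : \sum_a u 0 a * (C (val a))%:R = (cnt C u)%:R.
Proof.
rewrite /cnt -sum1_card (big_mkcond (fun a => a \in _)) natr_sum.
apply: eq_bigr => a _; rewrite [u 0 a]F2neq -natrM mulnb inE andbC.
by case: (_ && _).
Qed.

Lemma sum_all d Rn (u : vec d) :
  \sum_a u 0 a = (cnt cPn u + cnt (cRn Rn) u + cnt (cUn Rn) u)%:R.
Proof.
rewrite !natrD -!sum_cnt -!big_split /=; apply: eq_bigr => a _.
rewrite -!mulrDr /cUn; have := PR_excl Rn a.
by case: (cPn a); case: (cRn Rn a) => //= _; rewrite ?addr0 ?add0r mulr1.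
Qed.

Lemma uM_formula d Rn (M : 'M['F_2]_d) (u : vec d) c :
  (forall a b : 'I_d, M a b = 1 + (a == b)%:R + (crossn Rn a b)%:R) ->
  (u *m M) 0 c = ((cnt cPn u + cnt (cRn Rn) u + cnt (cUn Rn) u) + (u 0 c != 0)%R
     + cRn Rn c * cnt cPn u + cPn c * cnt (cRn Rn) u)%N%:R.
Proof.
move=> HM; rewrite mxE.
under eq_bigr => a _ do rewrite HM !mulrDr mulr1.
rewrite !big_split /= (sum_all Rn) !natrD.
have -> : \sum_(a < d) u 0 a * (a == c)%:R = (u 0 c != 0)%:R.
  rewrite (bigD1 c) //= eqxx mulr1 big1 ?addr0 -?F2neq // => a /negbTE ->.
  by rewrite mulr0.
have -> : \sum_(a < d) u 0 a * (crossn Rn a c)%:R =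
          (cRn Rn c)%:R * (cnt cPn u)%:R + (cPn c)%:R * (cnt (cRn Rn) u)%:R.
  rewrite -!sum_cnt !mulr_sumr -big_split /=; apply: eq_bigr => a _.
  rewrite /crossn; have := PR_excl Rn a; have := PR_excl Rn c.
  by case: (cPn a); case: (cRn Rn a); case: (cPn c); case: (cRn Rn c) => //= _ _;
     rewrite ?mulr1 ?mulr0 ?addr0 ?add0r ?mul1r ?mul0r.
by rewrite !natrM addrA.
Qed.

Definition goodM d Rn (M : 'M['F_2]_d) :=
  forall a b : 'I_d, M a b = 1 + (a == b)%:R + (crossn Rn a b)%:R.

Lemma goodM_sym d Rn M : @goodM d Rn M -> forall a b, M a b = M b a.
Proof. by move=> HM a b; rewrite !HM [b == a]eq_sym /crossn orbC andbC [cRn Rn b && _]andbC. Qed.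

Lemma goodM_diag d Rn M : @goodM d Rn M -> forall a, M a a = 0.
Proof.
move=> HM a; rewrite HM eqxx /crossn PR_excl andbC PR_excl /=.
by rewrite addr0 F2dbl.
Qed.

Lemma qq_ebar d (M : 'M['F_2]_d) c : qq M (ebar c) = 1.
Proof.
rewrite /qq big1 ?add0r.
  rewrite (bigD1 c) //= big1 ?addr0; first by rewrite ebarE eqxx.
  by move=> a /negbTE h; rewrite ebarE h.
move=> a _; apply: big1 => b hab; rewrite !ebarE.
case: eqP => [eac|_]; last by rewrite !mul0r.
case: eqP => [ebc|_]; last by rewrite mulr0.
by move: hab; rewrite eac ebc ltnn.
Qed.

Lemma qq_step d Rn (M : 'M['F_2]_d) (u : vec d) c : goodM Rn M ->
  qq M (u + ebar c) = qq M u + 1 + (u *m M) 0 c.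
Proof.
move=> HM; rewrite (polar _ _ (goodM_sym HM) (goodM_diag HM)) qq_ebar.
by rewrite form_ebar.
Qed.

Definition kk d Rn (u : vec d) := (cnt cPn u + cnt (cRn Rn) u + cnt (cUn Rn) u)%N.

Lemma cnt0_vec d Rn (u : vec d) : kk Rn u = 0%N -> u = 0.
Proof.
rewrite /kk => h; apply/rowP => a; rewrite mxE.
apply/eqP; apply/negPn/negP => ha.
have : (0 < cnt (if cPn a then cPn else if cRn Rn a then cRn Rn else cUn Rn) u)%N.
  apply/card_gt0P; exists a; rewrite inE ha andbT.
  by case: ifP => //; case: ifP => // h1 h2; rewrite /cUn h1 h2.
by case: ifP => _; [|case: ifP => _]; lia.
Qed.

Lemma Q_formula d Rn (M : 'M['F_2]_d) (u : vec d) : goodM Rn M ->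
  qq M u = ('C(kk Rn u, 2) + kk Rn u + cnt cPn u * cnt (cRn Rn) u)%N%:R.
Proof.
move=> HM; move: {2}(kk Rn u) (erefl (kk Rn u)) => n; elim: n u => [|n IH] u hk.
  have hx : cnt cPn u = 0%N by move: hk; rewrite /kk; lia.
  rewrite hk hx mul0n addn0 /= (cnt0_vec hk) /qq big1 ?add0r; last first.
    by move=> a _; apply: big1 => b _; rewrite mxE !mul0r.
  by rewrite big1 // => a _; rewrite mxE.
have [a ha] : exists a, u 0 a != 0.
  case: (pickP (fun a => u 0 a != 0)) => [a ha|h]; first by exists a.
  have h0 : forall C, cnt C u = 0%N.
    by move=> C; apply: eq_card0 => a; rewrite inE (negbTE (negbT (h a))) andbF.
  by move: hk; rewrite /kk !h0.
set u' := u + ebar a.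
have ee : ebar a + ebar a = 0 :> vec d by apply/rowP => i; rewrite !mxE F2dbl.
have eu : u = u' + ebar a by rewrite /u' -addrA ee addr0.
have ha' : u' 0 a = 0 by rewrite /u' addeE eqxx (F2neq (u 0 a)) ha F2dbl.
have hc : forall C, cnt C u = (cnt C u' + C (val a))%N by move=> C; rewrite {1}eu cnt_add.
have hk' : kk Rn u' = n.
  move: hk; rewrite /kk !hc /cUn; have := PR_excl Rn a.
  by case: (cPn a); case: (cRn Rn a) => //= _; lia.
rewrite {1}eu (qq_step _ _ HM) IH // (uM_formula _ _ HM) ha' eqxx /=.
have kS : kk Rn u = (kk Rn u').+1.
  by rewrite /kk !hc /cUn; have := PR_excl Rn a; case: (cPn a); case: (cRn Rn a) => //= _; lia.
rewrite kS binS bin1 !hc -/(kk Rn u').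
have := PR_excl Rn a.
rewrite (_ : (1 : 'F_2) = 1%:R) // -!natrD.
by case: (cPn a); case: (cRn Rn a) => //= _; congr (_%:R); lia.
Qed.

Lemma cls_facts Rn cl (i : nat) : clsn Rn cl i ->
  [/\ cPn i = (cl == 0%N), cRn Rn i = (cl == 1%N) & cUn Rn i = (cl != 0%N) && (cl != 1%N)].
Proof.
rewrite /clsn /cUn; have := PR_excl Rn i.
by case: cl => [|[|cl]] /=; case: (cPn i); case: (cRn Rn i).
Qed.

Lemma getc_prof d Rn (u : vec d) cl : getc (prof Rn u) cl = cnt (clsn Rn cl) u.
Proof.
rewrite /getc /prof /cnt /clsn.
by case: cl => [|[|cl]].
Qed.

Lemma csize_card d Rn cl : (3 + Rn <= d)%N ->
  csize Rn (d - (2 + Rn)) cl = #|[pred a : 'I_d | clsn Rn cl a]|.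
Proof.
move=> h; rewrite /csize /clsn; case: ifP => _; first by rewrite card_cP //; lia.
by case: ifP => _; [rewrite card_cR | rewrite card_cU].
Qed.

Lemma cnt_le d C (u : vec d) : (cnt C u <= #|[pred a : 'I_d | C a]|)%N.
Proof. by apply: subset_leq_card; apply/subsetP => a; rewrite !inE => /andP []. Qed.

Lemma exists_free d (C : pred nat) (u : vec d) :
  (cnt C u < #|[pred a : 'I_d | C a]|)%N -> exists c : 'I_d, C c /\ u 0 c = 0.
Proof.
move=> h; case: (pickP (fun a : 'I_d => C a && (u 0 a == 0))) => [c /andP [hc /eqP hu]|hn].
  by exists c.
suff : cnt C u = #|[pred a : 'I_d | C a]| by move=> e; rewrite e ltnn in h.
apply: eq_card => a; rewrite !inE; move: (hn a) => /=.
by case: (C a) => //= /negbT.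
Qed.

Lemma exists_supp d (C : pred nat) (u : vec d) :
  (0 < cnt C u)%N -> exists c : 'I_d, C c /\ u 0 c != 0.
Proof. by case/card_gt0P => c; rewrite inE => /andP [h1 h2]; exists c. Qed.

Lemma realize d Rn (M : 'M['F_2]_d) (u : vec d) m : goodM Rn M -> (3 + Rn <= d)%N ->
  valid1 Rn (d - (2 + Rn)) (prof Rn u) m -> qq M u = 1 ->
  exists c, prof Rn (u + ebar c) = stepp (prof Rn u) m /\ qq M (u + ebar c) = 1.
Proof.
case: m => cl a HM hd hv hq.
have hav : if a then (cnt (clsn Rn cl) u < #|[pred i : 'I_d | clsn Rn cl i]|)%N
           else (0 < cnt (clsn Rn cl) u)%N.
  move: hv; rewrite /valid1 -getc_prof -csize_card //.
  by rewrite /prof; case/andP.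
have hpar : odd (kk Rn u + ~~ a + (if cl == 0%N then cnt (cRn Rn) u else 0) +
                   (if cl == 1%N then cnt cPn u else 0)).
  by move: hv; rewrite /valid1 /prof /kk; case/andP.
case: a {hv} hav hpar => hav hpar.
  have [c [hc hu]] := exists_free hav.
  have [h1 h2 h3] := cls_facts hc.
  exists c; split.
    by rewrite /prof !cnt_add // h1 h2 h3 /stepp; case: cl {hc hav hpar h1 h2 h3} => [|[|cl]] /=; rewrite ?addn0 ?addn1.
  rewrite (qq_step _ _ HM) hq (uM_formula _ _ HM) hu eqxx /= F2nat.
  move: hpar; rewrite h1 h2 /kk addn0.
  by case: cl {hc hav h1 h2 h3} => [|[|cl]] /=; rewrite ?muln0 ?mul0n ?mul1n ?addn0 => ->; rewrite F2dbl add0r.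
have [c [hc hu]] := exists_supp hav.
have [h1 h2 h3] := cls_facts hc.
exists c; split.
  have e := fun C => cnt_rem C hu.
  rewrite /prof /stepp -(e cPn) -(e (cRn Rn)) -(e (cUn Rn)) h1 h2 h3.
  by case: cl {hc hav hpar h1 h2 h3} => [|[|cl]] /=; rewrite ?addn0 ?addn1.
rewrite (qq_step _ _ HM) hq (uM_formula _ _ HM) hu /= F2nat.
move: hpar; rewrite h1 h2 /kk.
by case: cl {hc hav h1 h2 h3} => [|[|cl]] /=; rewrite ?muln0 ?mul0n ?mul1n ?addn0 => ->; rewrite F2dbl add0r.
Qed.

Definition closedX d (M : 'M['F_2]_d) (X : {set vec d}) :=
  forall v w, v \in X -> w \in X -> qq M (v + w) = 1 -> v + w \in X.

Lemma ebar2 d (c : 'I_d) : ebar c + ebar c = 0 :> vec d.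
Proof. by apply/rowP => i; rewrite !mxE F2dbl. Qed.

Lemma toggle_in d (M : 'M['F_2]_d) X (u : vec d) c : closedX M X -> ebar c \in X ->
  u + ebar c \in X -> qq M u = 1 -> u \in X.
Proof.
move=> hX he hu hq; have := hX _ _ hu he; rewrite -addrA ebar2 addr0.
by apply.
Qed.

Lemma path_good d Rn (M : 'M['F_2]_d) X : goodM Rn M -> (3 + Rn <= d)%N -> closedX M X ->
  (forall c, ebar c \in X) -> forall ms (u : vec d),
  valid_path Rn (d - (2 + Rn)) (prof Rn u) ms -> qq M u = 1 ->
  (forall w, prof Rn w = final (prof Rn u) ms -> qq M w = 1 -> w \in X) -> u \in X.
Proof.
move=> HM hd hX he; elim=> [|m ms IH] u /=.
  by move=> _ hq hw; apply: hw.
case/andP=> h1 h2 hq hw.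
have [c [hp hq']] := realize HM hd h1 hq.
apply: (toggle_in hX (he c) _ hq).
apply: IH; rewrite ?hp //.
Qed.

Lemma kk_rem d Rn (u : vec d) c : u 0 c != 0 -> kk Rn (u + ebar c) = (kk Rn u).-1.
Proof.
move=> hu; rewrite /kk -(cnt_rem cPn hu) -(cnt_rem (cRn Rn) hu) -(cnt_rem (cUn Rn) hu).
by rewrite /cUn; have := PR_excl Rn c; case: (cPn c); case: (cRn Rn c) => //= _; lia.
Qed.

Lemma main_in d Rn (M : 'M['F_2]_d) X : goodM Rn M -> (Rn == 2%N) || (Rn == 4%N) -> (Rn + 4 <= d)%N ->
  closedX M X -> (forall c, ebar c \in X) ->
  forall u : vec d, qq M u = 1 -> notbad Rn (d - (2 + Rn)) (prof Rn u) -> u \in X.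
Proof.
move=> HM hR hd hX he u.
have hd3 : (3 + Rn <= d)%N by lia.
have [n] := ubnP (meas Rn (prof Rn u)); elim: n u => // n IH u hn hq hnb.
have hqf : qf (prof Rn u).
  by move: hq; rewrite (Q_formula _ HM) => /F2one_odd.
have hx : (cnt cPn u <= 2)%N by rewrite -(card_cP (d:=d)) ?cnt_le //; lia.
have hy : (cnt (cRn Rn) u <= Rn)%N by rewrite -{2}(card_cR hd3) cnt_le.
have hz : (cnt (cUn Rn) u <= d - (2 + Rn))%N by rewrite -(card_cU hd3) cnt_le.
have hU : (2 <= d - (2 + Rn))%N by lia.
case: (ltnP (kk Rn u) 2) => hk.
  have hk0 : kk Rn u <> 0%N.
    move=> h; have x0 : cnt cPn u = 0%N by move: h; rewrite /kk; lia.
    by move: hq; rewrite (Q_formula _ HM) h x0 => /F2one_odd.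
  have [a ha] : exists a, u 0 a != 0.
    case: (pickP (fun a => u 0 a != 0)) => [a ha|h]; first by exists a.
    have h0 : forall C, cnt C u = 0%N.
      by move=> C; apply: eq_card0 => a; rewrite inE (negbTE (negbT (h a))) andbF.
    by move: hk0; rewrite /kk !h0.
  have h0 : u + ebar a = 0 by apply: (cnt0_vec (Rn:=Rn)); rewrite kk_rem //; lia.
  have -> : u = ebar a by rewrite -[u]addr0 -(ebar2 a) addrA h0 add0r.
  exact: he.
move: hqf hnb hn; rewrite /prof.
set x := cnt cPn u; set y := cnt (cRn Rn) u; set z := cnt (cUn Rn) u => hqf hnb hn.
have hk' : (2 <= x + y + z)%N by [].
have hpath : let ms := path_of Rn (x, y, z) in
  [&& valid_path Rn (d - (2 + Rn)) (x, y, z) ms, meas Rn (final (x, y, z) ms) < meas Rn (x, y, z)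
    & notbad Rn (d - (2 + Rn)) (final (x, y, z) ms)]%N.
  case: (leqP z 2) => hz2; first exact: path_ok_small.
  by apply: path_ok_big.
move: hpath => /= /and3P [hv hm hnf].
apply: (path_good HM hd3 hX he hv hq) => w hw hqw.
apply: IH => //.
  by rewrite hw; apply: leq_trans hm _; rewrite -ltnS.
by rewrite hw.
Qed.

Lemma form_sym d Rn (M : 'M['F_2]_d) (u v : vec d) : goodM Rn M ->
  (u *m M *m v^T) 0 0 = (v *m M *m u^T) 0 0.
Proof.
move=> HM; rewrite !formE [RHS]exchange_big /=; apply: eq_bigr => a _; apply: eq_bigr => b _.
by rewrite (goodM_sym HM); ring.
Qed.

Lemma form_Dl d (M : 'M['F_2]_d) (u v w : vec d) :
  ((u + v) *m M *m w^T) 0 0 = (u *m M *m w^T) 0 0 + (v *m M *m w^T) 0 0.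
Proof. by rewrite !mulmxDl mxE. Qed.

Lemma qq0 d (M : 'M['F_2]_d) : qq M 0 = 0.
Proof.
rewrite /qq big1 ?add0r; first by rewrite big1 // => a _; rewrite mxE.
by move=> a _; apply: big1 => b _; rewrite mxE !mul0r.
Qed.

Lemma form_self d Rn (M : 'M['F_2]_d) (u : vec d) : goodM Rn M -> (u *m M *m u^T) 0 0 = 0.
Proof.
move=> HM; have := polar u u (goodM_sym HM) (goodM_diag HM).
have -> : u + u = 0 by apply/rowP => i; rewrite !mxE F2dbl.
by rewrite qq0 F2dbl add0r.
Qed.

Lemma form_uM d (M : 'M['F_2]_d) (u v : vec d) :
  (u *m M *m v^T) 0 0 = \sum_c (u *m M) 0 c * v 0 c.
Proof. by rewrite mxE; apply: eq_bigr => c _; rewrite !mxE. Qed.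

Lemma ebarM d (M : 'M['F_2]_d) a b : (ebar a *m M) 0 b = M a b.
Proof.
rewrite mxE (bigD1 a) //= big1 ?addr0; first by rewrite ebarE eqxx mul1r.
by move=> k /negbTE hk; rewrite ebarE hk mul0r.
Qed.

Lemma full_supp d (C : pred nat) (u : vec d) (a : 'I_d) :
  cnt C u = #|[pred i : 'I_d | C i]| -> C a -> u 0 a != 0.
Proof.
move=> h hC; apply/negP => /eqP hu.
have : (cnt C u <= #|[predD1 [pred i : 'I_d | C i] & a]|)%N.
  apply: subset_leq_card; apply/subsetP => i; rewrite !inE => /andP [hi hui].
  by rewrite hi andbT; apply: contraNneq hui => ->; rewrite hu.
by rewrite h (cardD1 a) inE hC /= ltnn.
Qed.

Lemma final_abs d Rn (pi : gperm d) : goodM Rn (Omegabar pi) ->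
  (forall u, Qform pi u = qq (Omegabar pi) u) -> (Rn == 2%N) || (Rn == 4%N) -> (Rn + 4 <= d)%N ->
  Qclosure pi [set ebar a | a : 'I_d] = NS pi :\: kerOmega pi.
Proof.
move=> HM HQ hR hd.
set M := Omegabar pi.
have hd3 : (3 + Rn <= d)%N by lia.
have hform : forall u v, Defs.form pi u v = (u *m M *m v^T) 0 0 by [].
have Y_sub : [set ebar a | a : 'I_d] \subset NS pi :\: kerOmega pi.
  apply/subsetP => _ /imsetP [a _ ->]; rewrite !inE HQ qq_ebar eqxx andbT.
  apply/negP => /forallP hk.
  have hb1 : (3 + Rn < d)%N by lia.
  have hb0 : (0 < d)%N by lia.
  pose b : 'I_d := if val a == 0%N then Ordinal hb1 else Ordinal hb0.
  have := hk (ebar b); rewrite hform form_ebar ebarM HM.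
  have hab : (a == b) = false.
    by rewrite /b; case: ifP => h; apply/negbTE; apply/eqP => e; move: h; rewrite e //= => /eqP.
  have hcr : crossn Rn a b = false.
    rewrite /crossn /b; case: ifP => _ /=; rewrite /cPn /cRn ?ltnn ?andbF ?orbF //.
  by rewrite hab hcr !addr0 => /eqP.
apply/eqP; rewrite eqEsubset; apply/andP; split.
  apply: bigcap_inf; rewrite Y_sub andbT /Qclosed.
  apply/andP; split; first by apply/subsetP => u; rewrite inE => /andP [].
  apply/forallP => v; apply/implyP => hv; apply/forallP => w; apply/implyP => hw.
  apply/implyP => /eqP hvw.
  move: hv hw; rewrite !inE hvw eqxx andbT => /andP [_ /eqP hv] /andP [_ /eqP hw].
  apply/negP => /forallP /(_ v) /eqP.
  rewrite hform form_Dl (form_self _ HM) add0r -hform.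
  have := polar v w (goodM_sym HM) (goodM_diag HM).
  rewrite -!HQ hvw hv hw -hform (hform w v) (form_sym _ _ HM) -hform.
  by move=> e1 e2; move: e1; rewrite e2 F2dbl addr0 => /eqP.
apply/bigcapsP => X /andP [hcl hY].
move: hcl; rewrite /Qclosed => /andP [_ /forallP hcl].
have hX : closedX M X.
  move=> v w hv hw hq; move: (hcl v); rewrite hv => /forallP /(_ w); rewrite hw /=.
  by rewrite HQ hq eqxx.
have he : forall c, ebar c \in X by move=> c; apply: (subsetP hY); apply: imset_f.
apply/subsetP => u; rewrite !inE => /andP [hk /eqP hq].
apply: (main_in HM hR hd hX he); first by rewrite -HQ.
rewrite /notbad /prof; apply/negP => /and4P [/eqP hx /eqP hy /eqP hz oU].
move/negP: hk; apply; apply/forallP => v.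
rewrite hform form_uM big1 // => c _.
rewrite (uM_formula _ _ HM).
have hc : u 0 c != 0.
  have : cPn c || cRn Rn c || cUn Rn c by rewrite /cUn; case: (cPn c); case: (cRn Rn c).
  case/orP => [/orP [] h|h].
  - by apply: (full_supp _ h); rewrite hx card_cP //; lia.
  - by apply: (full_supp _ h); rewrite hy card_cR.
  - by apply: (full_supp _ h); rewrite hz card_cU.
rewrite hc hx hy hz F2nat.
have := PR_excl Rn c.
have oR : odd Rn = false by case/orP: hR => /eqP ->.
case: (cPn c); case: (cRn Rn c) => //= _;
  by rewrite ?muln0 ?mul0n ?mul1n ?muln1 ?addn0 !oddD oR oU /= mul0r.
Qed.

Local Open Scope nat_scope.

Lemma idx_rev_iota m d i : (1 <= m)%N -> (m <= i.+1 <= d)%N ->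
  index i.+1 (rev (iota m (d - (m - 1)))) = (d - i.+1)%N.
Proof.
move=> hm /andP [h1 h2].
have hk : (d - i.+1 < size (rev (iota m (d - (m - 1)))))%N by rewrite size_rev size_iota; lia.
have e : nth 0%N (rev (iota m (d - (m - 1)))) (d - i.+1) = i.+1.
  rewrite nth_rev; last by move: hk; rewrite size_rev.
  rewrite size_iota nth_iota; first lia.
  lia.
by rewrite -{1}e index_uniq // rev_uniq iota_uniq.
Qed.

Lemma idx_bottom m d (L : seq nat) (i : nat) : (1 <= m)%N -> (i < d)%N -> (m - 1 <= d)%N ->
  index i.+1 (rev (iota m (d - (m - 1))) ++ L) =
  if (m <= i.+1)%N then (d - i.+1)%N else (d - (m - 1) + index i.+1 L)%N.
Proof.
move=> hm hid hmd; rewrite index_cat mem_rev mem_iota.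
case: ifP => h.
  by rewrite idx_rev_iota // (andP h).1 /=; lia.
have -> : (m <= i.+1)%N = false by apply/negbTE; move/negbT: h; lia.
by rewrite size_rev size_iota.
Qed.

Definition invb (bp : nat -> nat) (i j : nat) : bool :=
  ((i < j) && (bp j < bp i)) || ((j < i) && (bp i < bp j)).

Definition small_check (Rn : nat) (L : seq nat) : bool :=
  all (fun i => all (fun j =>
    invb (fun k => index k.+1 L) i j == (i != j) && ~~ crossn Rn i j)
    (iota 0 (Rn + 3))) (iota 0 (Rn + 3)).

Lemma inv_char Rn d (L : seq nat) : (Rn + 4 <= d)%N -> small_check Rn L ->
  forall i j, (i < d)%N -> (j < d)%N ->
  invb (fun k => index k.+1 (rev (iota (Rn + 4) (d - (Rn + 4 - 1))) ++ L)) i j =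
  (i != j) && ~~ crossn Rn i j.
Proof.
move=> hd hc i j hi hj.
have hb : forall k, (k < d)%N -> index k.+1 (rev (iota (Rn + 4) (d - (Rn + 4 - 1))) ++ L) =
   if (Rn + 4 <= k.+1)%N then (d - k.+1)%N else (d - (Rn + 4 - 1) + index k.+1 L)%N.
  by move=> k hk; apply: idx_bottom => //; lia.
rewrite /invb !hb //.
have cb : forall k, (Rn + 4 <= k.+1)%N -> cPn k = false /\ cRn Rn k = false.
  by move=> k hk; rewrite /cPn /cRn; split; apply/negbTE; lia.
case: (leqP (Rn + 4) i.+1) => hi'; case: (leqP (Rn + 4) j.+1) => hj'.
- have [c1 c2] := cb i hi'; have [c3 c4] := cb j hj'.
  rewrite /crossn c1 c2 c3 c4 /= andbT.
  by case: (ltngtP i j) => h /=; try lia; rewrite h eqxx.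
- have [c1 c2] := cb i hi'; rewrite /crossn c1 c2 /= andbT.
  have -> : (i != j) = true by lia.
  have -> : (j < i)%N = true by lia.
  have -> : (i < j)%N = false by lia.
  by rewrite /=; lia.
- have [c3 c4] := cb j hj'; rewrite /crossn c3 c4 /= !andbF /= andbT.
  have -> : (i != j) = true by lia.
  have -> : (i < j)%N = true by lia.
  by rewrite /=; lia.
- rewrite !ltn_add2l.
  have hi2 : i \in iota 0 (Rn + 3) by rewrite mem_iota; lia.
  have hj2 : j \in iota 0 (Rn + 3) by rewrite mem_iota; lia.
  by move/allP: hc => /(_ i hi2) /allP /(_ j hj2) /eqP.
Qed.

Local Open Scope ring_scope.

Lemma Omegabar_inv d (pi : gperm d) a b :
  Omegabar pi a b = (((pit pi a < pit pi b) && (pib pi a > pib pi b)) ||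
                      ((pit pi a > pit pi b) && (pib pi a < pib pi b)))%N%:R.
Proof.
rewrite /Omegabar /Omega !mxE.
case: ifP => h1 /=; first by apply/eqP.
by case: ifP => h2; apply/eqP.
Qed.

Lemma goodM_gen d Rn (pi : gperm d) (L : seq nat) : (Rn + 4 <= d)%N -> small_check Rn L ->
  (forall a, pit pi a = val a) ->
  (forall a, pib pi a = index (val a).+1 (rev (iota (Rn + 4) (d - (Rn + 4 - 1))) ++ L)) ->
  goodM Rn (Omegabar pi).
Proof.
move=> hd hc ht hb a b; rewrite Omegabar_inv !ht !hb.
have := inv_char hd hc (ltn_ord a) (ltn_ord b); rewrite /invb => ->.
case: (eqVneq a b) => [->|hab].
  by rewrite eqxx /crossn [cRn Rn b && _]andbC PR_excl /= addr0 F2dbl.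
by rewrite hab /= addr0; case: (crossn Rn a b) => /=; rewrite ?F2dbl ?addr0.
Qed.

Lemma goodM_tau d : (6 <= d)%N -> goodM 2 (Omegabar (tau d)).
Proof.
move=> hd; by apply: (goodM_gen (L := [:: 3; 2; 5; 4; 1]%N)).
Qed.

Lemma goodM_sigma d : (8 <= d)%N -> goodM 4 (Omegabar (sigma d)).
Proof.
move=> hd; by apply: (goodM_gen (L := [:: 3; 2; 7; 6; 5; 4; 1]%N)).
Qed.

Lemma HQ_tau d u : Qform (tau d) u = qq (Omegabar (tau d)) u.
Proof. by []. Qed.

Lemma HQ_sigma d u : Qform (sigma d) u = qq (Omegabar (sigma d)) u.
Proof. by []. Qed.

Theorem lemma4p7 (d : nat) (pi : gperm d) :
  ((6 <= d)%N /\ pi = tau d) \/ ((8 <= d)%N /\ pi = sigma d) ->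
  Qclosure pi [set ebar a | a : 'I_d] = NS pi :\: kerOmega pi.
Proof.
case=> [[hd ->]|[hd ->]].
  by apply: (final_abs (Rn := 2)) => //; exact: goodM_tau.
by apply: (final_abs (Rn := 4)) => //; exact: goodM_sigma.
Qed.
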